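(* Let $G$ be a finitely generated group of exponential growth with finite generating set $A$, $S=A\cup A^{-1}$, and let $\psi:L\to G$ be an arbitrary bijection from a language $L\subseteq S^*$ onto $G$. Then there is a constant $\lambda_1>0$ such that, with $B_n=\{g\in G: d_A(g)\le n\}$ and $Q'_n=\{g\in B_n: \lambda_1 d_A(g)\le|\psi^{-1}(g)|\}$, one has $\lim_{n\to\infty}\#Q'_n/\#B_n=1$, and for every $g\in Q'_n$, writing $w=\psi^{-1}(g)$, $d_A(\pi(w),\psi(w))\le(1+1/\lambda_1)|w|$.
   Context: $\pi:S^*\to G$ is the evaluation map and $d_A$ the word metric of $\Gamma(G,A)$, $d_A(g)=d_A(e,g)$. Exponential growth means there is $\lambda>1$ with $\#B_n\ge\lambda^n$ for all large $n$. *)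

(* Defs.v *)
From Stdlib Require Import Reals Lra Lia List Classical ClassicalEpsilon.
Import ListNotations.
Open Scope R_scope.

Record group_laws (G : Type) (mul : G -> G -> G) (inv : G -> G) (e : G) : Prop := {
  gl_assoc : forall x y z, mul x (mul y z) = mul (mul x y) z;
  gl_idl   : forall x, mul e x = x;
  gl_invl  : forall x, mul (inv x) x = e }.

Definition inS {G : Type} (inv : G -> G) (A : list G) (x : G) : Prop :=
  exists a, In a A /\ (x = a \/ x = inv a).

Definition is_word {G : Type} (inv : G -> G) (A : list G) (w : list G) : Prop :=
  Forall (inS inv A) w.

Definition eval {G : Type} (mul : G -> G -> G) (e : G) (w : list G) : G :=
  fold_right mul e w.

Definition generates {G : Type} (mul : G -> G -> G) (inv : G -> G) (e : G) (A : list G) : Prop :=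
  forall g, exists w, is_word inv A w /\ eval mul e w = g.

Definition is_wordlen {G : Type} (mul : G -> G -> G) (inv : G -> G) (e : G) (A : list G)
  (g : G) (n : nat) : Prop :=
  (exists w, is_word inv A w /\ length w = n /\ eval mul e w = g) /\
  (forall w, is_word inv A w -> eval mul e w = g -> (n <= length w)%nat).

(* d_A(g) = d_A(e,g) (well-defined when A generates G) *)
Definition dA {G : Type} (mul : G -> G -> G) (inv : G -> G) (e : G) (A : list G) (g : G) : nat :=
  epsilon (inhabits 0%nat) (is_wordlen mul inv e A g).

Definition wdist {G : Type} (mul : G -> G -> G) (inv : G -> G) (e : G) (A : list G) (x y : G) : nat :=
  dA mul inv e A (mul (inv x) y).

Definition ball {G : Type} (mul : G -> G -> G) (inv : G -> G) (e : G) (A : list G)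
  (n : nat) (g : G) : Prop := (dA mul inv e A g <= n)%nat.

Definition card_is {T : Type} (P : T -> Prop) (k : nat) : Prop :=
  exists l : list T, NoDup l /\ length l = k /\ forall x, In x l <-> P x.

Definition exp_growth {G : Type} (mul : G -> G -> G) (inv : G -> G) (e : G) (A : list G) : Prop :=
  exists lam : R, 1 < lam /\ exists N : nat, forall n : nat, (N <= n)%nat ->
    forall b, card_is (ball mul inv e A n) b -> lam ^ n <= INR b.

(* Main.v *)
Require Import Defs.
From Stdlib Require Import Reals List Lia Lra Classical ClassicalEpsilon.
Import ListNotations.
Open Scope R_scope.

Section Grp.
Variables (G : Type) (mul : G -> G -> G) (inv : G -> G) (e : G).
Hypothesis HG : group_laws G mul inv e.

Lemma g_mulinv x : mul x (inv x) = e.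
Proof.
  destruct HG as [as_ idl invl].
  transitivity (mul (mul (inv (inv x)) (inv x)) (mul x (inv x))).
  { now rewrite invl, idl. }
  rewrite <- as_, (as_ (inv x) x (inv x)), invl, idl. apply invl.
Qed.

Lemma g_mule x : mul x e = x.
Proof.
  destruct HG as [as_ idl invl].
  rewrite <- (invl x), as_, g_mulinv. apply idl.
Qed.

Lemma g_invinv x : inv (inv x) = x.
Proof.
  destruct HG as [as_ idl invl].
  rewrite <- (g_mule (inv (inv x))), <- (invl x), as_, invl. apply idl.
Qed.

Lemma g_leftinv u x : mul u x = e -> u = inv x.
Proof.
  destruct HG as [as_ idl invl]. intros H.
  rewrite <- (g_mule u), <- (g_mulinv x), as_, H. apply idl.
Qed.

Lemma eval_app (u v : list G) : eval mul e (u ++ v) = mul (eval mul e u) (eval mul e v).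
Proof.
  destruct HG as [as_ idl invl].
  induction u; simpl. now rewrite idl. rewrite IHu. apply as_.
Qed.

Lemma eval_rev_inv (w : list G) : eval mul e (rev (map inv w)) = inv (eval mul e w).
Proof.
  apply g_leftinv. destruct HG as [as_ idl invl].
  induction w as [|a w IH]; simpl.
  - apply idl.
  - rewrite eval_app. simpl. rewrite g_mule.
    rewrite <- as_, (as_ (inv a)), invl, idl. exact IH.
Qed.

Variable A : list G.

Lemma inS_inv x : inS inv A x -> inS inv A (inv x).
Proof.
  intros [a [Ha [->| ->]]]; exists a; split; auto. left; now apply g_invinv.
Qed.

Lemma is_word_rev_inv w : is_word inv A w -> is_word inv A (rev (map inv w)).
Proof.
  unfold is_word. intros H. apply Forall_rev. apply Forall_map.
  eapply Forall_impl; [|exact H]. apply inS_inv.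
Qed.

Lemma least_nat (P : nat -> Prop) : (exists n, P n) -> exists n, P n /\ forall m, P m -> (n <= m)%nat.
Proof.
  intros [n Hn]. apply NNPP. intros Hno.
  assert (forall k, forall m, (m <= k)%nat -> ~ P m).
  { induction k; intros m Hm Pm.
    - apply Hno. exists m. split; auto. intros; lia.
    - destruct (classic (exists j, P j /\ (j < m)%nat)) as [[j [Pj Hj]]|Hn'].
      + apply (IHk j); auto; lia.
      + apply Hno. exists m. split; auto. intros m' Pm'.
        destruct (Compare_dec.le_lt_dec m m'); auto. exfalso; apply Hn'; eauto. }
  apply (H n n); auto.
Qed.

Hypothesis Hgen : generates mul inv e A.

Lemma dA_spec g : is_wordlen mul inv e A g (dA mul inv e A g).
Proof.
  unfold dA. apply epsilon_spec.
  destruct (Hgen g) as [w [Hw Hev]].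
  destruct (least_nat (fun n => exists w, is_word inv A w /\ length w = n /\ eval mul e w = g))
    as [n [[w' Hw'] Hmin]].
  { exists (length w); eauto. }
  exists n. split; eauto.
Qed.

Lemma dA_le w : is_word inv A w -> (dA mul inv e A (eval mul e w) <= length w)%nat.
Proof. intros H. apply (proj2 (dA_spec _)); auto. Qed.

Lemma dA_tri x y : (dA mul inv e A (mul (inv x) y) <= dA mul inv e A x + dA mul inv e A y)%nat.
Proof.
  destruct (proj1 (dA_spec x)) as [wx [Hx [Lx Ex]]].
  destruct (proj1 (dA_spec y)) as [wy [Hy [Ly Ey]]].
  assert (Hw : is_word inv A (rev (map inv wx) ++ wy)).
  { unfold is_word. apply Forall_app. split; auto. now apply is_word_rev_inv. }
  pose proof (dA_le _ Hw) as H.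
  rewrite eval_app, eval_rev_inv, Ex, Ey in H.
  rewrite length_app, length_rev, length_map in H. lia.
Qed.

End Grp.
Fixpoint wordsle {T : Type} (Sl : list T) (m : nat) : list (list T) :=
  match m with
  | O => [[]]
  | S m => [] :: flat_map (fun a => map (cons a) (wordsle Sl m)) Sl
  end.

Lemma In_wordsle {T : Type} (Sl : list T) m w :
  In w (wordsle Sl m) <-> Forall (fun x => In x Sl) w /\ (length w <= m)%nat.
Proof.
  revert w; induction m; intros w; simpl.
  - split.
    + intros [<-|[]]. simpl; split; auto.
    + intros [_ H]. destruct w; simpl in *; [auto|lia].
  - rewrite in_flat_map. split.
    + intros [<-|[a [Ha Hw]]]. simpl; split; auto; lia.
      apply in_map_iff in Hw. destruct Hw as [w' [<- Hw']].
      apply IHm in Hw'. destruct Hw'. simpl. split; auto. lia.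
    + intros [HF Hl]. destruct w as [|a w]; auto. right.
      inversion HF; subst. exists a. split; auto. apply in_map_iff.
      exists w; split; auto. apply IHm. simpl in Hl. split; auto; lia.
Qed.

Lemma length_flat_map_const {T U : Type} (f : T -> list U) k (l : list T) :
  (forall a, length (f a) = k) -> length (flat_map f l) = (length l * k)%nat.
Proof.
  intros H; induction l; simpl; auto. rewrite length_app, H, IHl. lia.
Qed.

Lemma length_wordsle {T : Type} (Sl : list T) m :
  (length (wordsle Sl m) <= (length Sl + 1) ^ m)%nat.
Proof.
  induction m; simpl; auto.
  rewrite (length_flat_map_const _ (length (wordsle Sl m))).
  2:{ intros; apply length_map. }
  assert (1 <= (length Sl + 1) ^ m)%nat.
  { clear. induction m; simpl; lia. }
  nia.
Qed.

Definition cdec {T : Type} : forall x y : T, {x = y} + {x <> y} :=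
  fun x y => excluded_middle_informative (x = y).

Definition pdec {T : Type} (P : T -> Prop) (x : T) : bool :=
  if excluded_middle_informative (P x) then true else false.

Lemma pdec_spec {T : Type} (P : T -> Prop) x : pdec P x = true <-> P x.
Proof. unfold pdec. destruct excluded_middle_informative; split; auto; discriminate. Qed.

Lemma NoDup_map_inj {T U : Type} (f : T -> U) (l : list T) :
  NoDup l -> (forall x y, In x l -> In y l -> f x = f y -> x = y) -> NoDup (map f l).
Proof.
  induction l as [|a l IH]; simpl; intros Hn Hi; constructor.
  - inversion Hn; subst. intros Hin. apply in_map_iff in Hin.
    destruct Hin as [x [Hx Hxl]]. assert (x = a) by (apply Hi; auto). subst; auto.
  - inversion Hn; subst. apply IH; auto.
Qed.

Lemma bernoulli x k : 1 <= x -> 1 + INR k * (x - 1) <= x ^ k.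
Proof.
  intros Hx. induction k. simpl; lra. change (x ^ S k) with (x * x ^ k).
  rewrite S_INR in *. assert (1 <= x ^ k) by (apply pow_R1_Rle; lra). nra.
Qed.

Theorem mainTheorem14 (G : Type) (mul : G -> G -> G) (inv : G -> G) (e : G)
  (HG : group_laws G mul inv e) (A : list G)
  (Hgen : generates mul inv e A) (Hexp : exp_growth mul inv e A)
  (L : list G -> Prop) (HL : forall w, L w -> is_word inv A w)
  (psi : list G -> G)
  (Hinj : forall w1 w2, L w1 -> L w2 -> psi w1 = psi w2 -> w1 = w2)
  (Hsurj : forall g, exists w, L w /\ psi w = g) :
  exists lam1 : R, 0 < lam1 /\
    let Q' := fun (n : nat) (g : G) =>
      ball mul inv e A n g /\
      exists w, L w /\ psi w = g /\ lam1 * INR (dA mul inv e A g) <= INR (length w) in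
    (forall eps : R, 0 < eps -> exists N : nat, forall n : nat, (N <= n)%nat ->
       exists b q : nat, card_is (ball mul inv e A n) b /\ card_is (Q' n) q /\
         Rabs (INR q / INR b - 1) < eps) /\
    (forall (n : nat) (g : G), Q' n g -> forall w, L w -> psi w = g ->
       INR (wdist mul inv e A (eval mul e w) (psi w)) <= (1 + 1 / lam1) * INR (length w)).
Proof.
  set (Sl := A ++ map inv A).
  set (s := length Sl).
  assert (HSl : forall x, inS inv A x <-> In x Sl).
  { intros x; unfold Sl; rewrite in_app_iff, in_map_iff; split.
    - intros [a [Ha [->| ->]]]; auto. right; eauto.
    - intros [H|[a [<- H]]]; exists x || exists a; eauto. }
  assert (Hwd : forall w, is_word inv A w <-> Forall (fun x => In x Sl) w).
  { intros w; unfold is_word; split; apply Forall_impl; apply HSl. }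
  destruct Hexp as [lam [Hlam [N0 HN0]]].
  destruct (archimed_cor1 ((lam - 1) / (2 * (INR s + 1)))) as [K [HK HK0]].
  { assert (0 <= INR s) by apply pos_INR. apply Rdiv_lt_0_compat; lra. }
  assert (HKr : 0 < INR K) by (apply lt_0_INR; lia).
  assert (HlamK : 2 * (INR s + 1) <= lam ^ K).
  { assert (0 <= INR s) by apply pos_INR.
    pose proof (bernoulli lam K ltac:(lra)).
    assert (Hk : 2 * (INR s + 1) < INR K * (lam - 1)).
    { apply Rmult_lt_compat_l with (r := INR K * (2 * (INR s + 1))) in HK.
      2:{ apply Rmult_lt_0_compat; lra. }
      unfold Rdiv in HK.
      replace (INR K * (2 * (INR s + 1)) * / INR K) with (2 * (INR s + 1)) in HK
        by (field; lra).
      replace (INR K * (2 * (INR s + 1)) * ((lam - 1) * / (2 * (INR s + 1))))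
        with (INR K * (lam - 1)) in HK by (field; lra). exact HK. }
    lra. }
  exists (/ INR K). split; [apply Rinv_0_lt_compat; exact HKr|].
  intro Q'.
  set (Bl := fun n => nodup cdec (map (eval mul e) (wordsle Sl n))).
  assert (HBl : forall n g, In g (Bl n) <-> ball mul inv e A n g).
  { intros n g. unfold Bl, ball. rewrite nodup_In, in_map_iff. split.
    - intros [w [<- Hw]]. apply In_wordsle in Hw. destruct Hw as [Hw Hl].
      pose proof (dA_le G mul inv e A Hgen w (proj2 (Hwd w) Hw)). lia.
    - intros Hb. destruct (proj1 (dA_spec G mul inv e A Hgen g)) as [w [Hw [Hl Hev]]].
      exists w. split; auto. apply In_wordsle. split; [now apply Hwd|lia]. }
  split.
  - intros eps Heps.
    destruct (archimed_cor1 eps Heps) as [M [HM HM0]].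
    exists (max N0 (K * M)). intros n Hn.
    set (Ql := filter (pdec (Q' n)) (Bl n)).
    set (Cl := filter (fun x => negb (pdec (Q' n) x)) (Bl n)).
    pose proof (filter_length (pdec (Q' n)) (Bl n)) as Hlen.
    fold Ql Cl in Hlen.
    assert (HBc : card_is (ball mul inv e A n) (length (Bl n))).
    { exists (Bl n). split; [apply NoDup_nodup|split; auto]. }
    exists (length (Bl n)), (length Ql). split; [exact HBc|split].
    + exists Ql. split; [apply NoDup_filter, NoDup_nodup|split; auto].
      intros x. unfold Ql. rewrite filter_In, pdec_spec, HBl. split; [tauto|].
      intros H; split; auto. exact (proj1 H).
    + set (m := (n / K)%nat).
      assert (HMm : (M <= m)%nat) by (apply Nat.div_le_lower_bound; lia).
      set (f := fun g => proj1_sig (constructive_indefinite_description _ (Hsurj g))).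
      assert (Hf : forall g, L (f g) /\ psi (f g) = g).
      { intros g; unfold f; destruct constructive_indefinite_description; auto. }
      assert (Hc : (length Cl <= (s + 1) ^ m)%nat).
      { rewrite <- (length_map f).
        eapply Nat.le_trans; [|apply length_wordsle].
        apply NoDup_incl_length.
        - apply NoDup_map_inj. apply NoDup_filter, NoDup_nodup.
          intros x y _ _ Hxy. rewrite <- (proj2 (Hf x)), <- (proj2 (Hf y)), Hxy; auto.
        - intros w Hw. apply in_map_iff in Hw. destruct Hw as [g [<- Hg]].
          unfold Cl in Hg. rewrite filter_In in Hg. destruct Hg as [Hg Hng].
          apply HBl in Hg.
          assert (HnQ : ~ Q' n g).
          { intros HQ. apply pdec_spec in HQ. rewrite HQ in Hng. discriminate. }
          destruct (Hf g) as [Lw Pw].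
          apply In_wordsle. split; [apply Hwd; auto|].
          assert (Hlt : INR (length (f g)) < / INR K * INR (dA mul inv e A g)).
          { apply Rnot_le_lt. intros Hle. apply HnQ. split; auto. exists (f g); auto. }
          assert (Hlt2 : (length (f g) * K < n)%nat).
          { apply INR_lt. rewrite mult_INR.
            apply Rmult_lt_compat_l with (r := INR K) in Hlt; [|lra].
            rewrite <- Rmult_assoc, Rinv_r in Hlt by lra.
            apply le_INR in Hg. nra. }
          unfold m. apply Nat.div_le_lower_bound; lia. }
      assert (Hb : lam ^ n <= INR (length (Bl n))) by (apply HN0; auto; lia).
      assert (Hs0 : 0 <= INR s) by apply pos_INR.
      assert (Hpow : 2 ^ m * (INR s + 1) ^ m <= lam ^ n).
      { rewrite <- Rpow_mult_distr.
        apply Rle_trans with ((lam ^ K) ^ m).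
        - apply pow_incr. lra.
        - rewrite <- pow_mult. apply Rle_pow; [lra|].
          unfold m. apply Nat.Div0.mul_div_le. }
      assert (Hcr : INR (length Cl) <= (INR s + 1) ^ m).
      { replace (INR s + 1) with (INR (s + 1)) by (rewrite plus_INR; simpl; lra).
        rewrite <- pow_INR. apply le_INR; auto. }
      assert (H2m : INR M <= 2 ^ m).
      { pose proof (bernoulli 2 m ltac:(lra)). apply le_INR in HMm. lra. }
      assert (HMr : 0 < INR M) by (apply lt_0_INR; lia).
      assert (Hsp : 0 < (INR s + 1) ^ m) by (apply pow_lt; lra).
      assert (Hbp : 0 < INR (length (Bl n))).
      { assert (0 < 2 ^ m) by (apply pow_lt; lra). nra. }
      replace (INR (length Ql)) with (INR (length (Bl n)) - INR (length Cl))
        by (rewrite <- Hlen, plus_INR; ring).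
      replace ((INR (length (Bl n)) - INR (length Cl)) / INR (length (Bl n)) - 1)
        with (- (INR (length Cl) / INR (length (Bl n)))) by (field; lra).
      rewrite Rabs_Ropp, Rabs_right.
      2:{ apply Rle_ge. unfold Rdiv. apply Rmult_le_pos; [apply pos_INR|apply Rlt_le, Rinv_0_lt_compat; lra]. }
      apply Rle_lt_trans with (/ INR M); [|exact HM].
      apply Rmult_le_reg_r with (INR (length (Bl n))); [lra|].
      unfold Rdiv. rewrite Rmult_assoc, Rinv_l, Rmult_1_r by lra.
      apply Rle_trans with ((INR s + 1) ^ m); [exact Hcr|].
      apply Rmult_le_reg_l with (INR M); [lra|].
      rewrite <- Rmult_assoc, Rinv_r, Rmult_1_l by lra.
      nra.
  - intros n g [Hb [w' [Lw' [Pw' Hle]]]] w Lw Pw.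
    assert (w' = w) by (apply Hinj; congruence). subst w'.
    unfold wdist. rewrite Pw.
    pose proof (dA_tri G mul inv e HG A Hgen (eval mul e w) g) as Ht.
    pose proof (dA_le G mul inv e A Hgen w (HL w Lw)) as Hd.
    apply le_INR in Ht. apply le_INR in Hd. rewrite plus_INR in Ht.
    replace (1 / / INR K) with (INR K) by (field; lra).
    apply Rmult_le_compat_l with (r := INR K) in Hle; [|lra].
    rewrite <- Rmult_assoc, Rinv_r, Rmult_1_l in Hle by lra.
    nra.
Qed.
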